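(* Let $X$ be a compact scattered space with countable scattered height. Suppose that to each $x\in X$ one can assign a clopen neighborhood $U_x$ of $x$ such that $U_x\cap X^{(h(x))}=\{x\}$ and $\{U_x:x\in X\}$ is point-countable. If $X$ has a $P$-base for some directed set $P$ with calibre $(\omega_1,\omega)$, then $X$ is countable, hence metrizable.
   Context: All spaces are Tychonoff. $X$ is scattered if every nonempty subspace has an isolated point; for $A\subseteq X$ let $A'$ be the set of non-isolated points of $A$, set $X^{(0)}=X$, $X^{(\alpha)}=\bigcap_{\beta<\alpha}(X^{(\beta)})'$ for $\alpha>0$; for $x\in X$, $h(x)$ is the ordinal with $x\in X^{(h(x))}\setminus X^{(h(x)+1)}$, and the scattered height is $h(X)=\sup\{h(x):x\in X\}$. A family is point-countable if each point lies in only countably many members. A $P$-base is an assignment to each $x\in X$ of a neighborhood base $\{U_p:p\in P\}$ at $x$ with $U_p\subseteq U_{p'}$ whenever $p\ge p'$. A directed set has calibre $(\omega_1,\omega)$ if every uncountable subset contains an infinite subset with an upper bound. *)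

(* Defs.v *)
From HB Require Import structures.
From mathcomp Require Import all_boot all_order all_algebra.
From mathcomp Require Import all_classical all_reals all_analysis.
From mathcomp Require Import Rstruct Rstruct_topology.

Set Implicit Arguments.
Unset Strict Implicit.
Unset Printing Implicit Defensive.

Import Order.TTheory GRing.Theory Num.Theory.
Local Open Scope classical_set_scope.
Local Open Scope ring_scope.

Definition tychonoff_space (X : topologicalType) : Prop :=
  completely_regular_space X /\ accessible_space X.

Definition derived {X : topologicalType} (A : set X) : set X :=
  A `&` limit_point A.

Definition scattered (X : topologicalType) : Prop :=
  forall A : set X, A !=set0 -> exists2 x, A x & ~ limit_point A x.

Definition well_order {W : Type} (lt : W -> W -> Prop) : Prop :=
  [/\ well_founded lt,
      (forall a b c, lt a b -> lt b c -> lt a c)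
    & (forall a b, a = b \/ lt a b \/ lt b a)].

(* Cantor-Bendixson derivatives indexed by a well-founded relation:
   X^(a) = \bigcap_{b < a} (X^(b))'   (the empty intersection being X). *)
Definition CB_level {X : topologicalType} {W : Type} (lt : W -> W -> Prop)
  (wf : well_founded lt) : W -> set X :=
  Fix wf (fun _ => set X)
    (fun a rec => [set x : X | forall b (h : lt b a), derived (rec b h) x]).

Arguments CB_level {X W} lt wf _ _.

(* x has scattered height a (i.e. h(x) = a): x \in X^(a) \ X^(a+1),
   where X^(a+1) = (X^(a))'. *)
Definition has_height {X : topologicalType} {W : Type} (lt : W -> W -> Prop)
  (wf : well_founded lt) (x : X) (a : W) : Prop :=
  CB_level lt wf a x /\ ~ derived (CB_level lt wf a) x.

Arguments has_height {X W} lt wf x a.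

Definition point_countable {X I : Type} (F : I -> set X) : Prop :=
  forall y : X, countable [set i | F i y].

Definition directed {P : Type} (le : P -> P -> Prop) : Prop :=
  [/\ (forall p, le p p),
      (forall p q r, le p q -> le q r -> le p r)
    & (forall p q, exists r, le p r /\ le q r)].

Definition calibre_w1_w {P : Type} (le : P -> P -> Prop) : Prop :=
  forall A : set P, ~ countable A ->
    exists B : set P, [/\ B `<=` A, infinite_set B & exists u, forall b, B b -> le b u].

Definition P_base {X : topologicalType} {P : Type} (le : P -> P -> Prop)
  (U : X -> P -> set X) : Prop :=
  forall x : X,
    [/\ (forall p, nbhs x (U x p)),
        (forall V, nbhs x V -> exists p, U x p `<=` V)
      & (forall p p', le p' p -> U x p `<=` U x p')].

Definition has_P_base {X : topologicalType} {P : Type} (le : P -> P -> Prop) : Prop :=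
  exists U : X -> P -> set X, P_base le U.

Definition metrizable (X : topologicalType) : Prop :=
  exists d : X -> X -> Rdefinitions.R,
    [/\ (forall x y, 0 <= d x y),
        (forall x y, d x y = 0 <-> x = y),
        (forall x y, d x y = d y x),
        (forall x y z, d x z <= d x y + d y z)
      & (forall x (A : set X), nbhs x A <-> exists2 e, 0 < e & [set y | d x y < e] `<=` A)].

(* Main.v *)
Require Import Defs.
From HB Require Import structures.
From mathcomp Require Import all_boot all_order all_algebra.
From mathcomp Require Import all_classical all_reals all_analysis.
From mathcomp Require Import finmap.
From Stdlib Require Import Relation_Operators Operators_Properties.
From mathcomp Require Import Rstruct Rstruct_topology.
Local Open Scope classical_set_scope.

Definition ptX (X : topologicalType) (x0 : X) : Type := X.
HB.instance Definition _ (X : topologicalType) (x0 : X) := Topological.on (@ptX X x0).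
HB.instance Definition _ (X : topologicalType) (x0 : X) := isPointed.Build (@ptX X x0) x0.

Lemma cover_fin (X : topologicalType) (N : X -> set X) : compact [set: X] ->
  (forall z, open (N z) /\ N z z) -> exists D : {fset X}, forall x, exists2 z, z \in D & N z x.
Proof.
move=> cX0 HN.
have [x0|X0] := pselect (exists x : X, True); last first.
  exists fset0 => x; exfalso; apply: X0; by exists x.
case: x0 => x0 _.
have cX : cover_compact [set: @ptX X x0] by rewrite -compact_cover.
have op : forall i, setT i -> open (N i) by move=> i _; case: (HN i).
have cov : [set: X] `<=` cover setT N.
  by move=> x _; exists x => //; exact: (proj2 (HN x)).
have [D _ HD] := cX X setT N op cov.
exists D => x; have [z /= zD Nzx] := HD x I; by exists z.
Qed.

Lemma cover_countable (X : topologicalType) : compact [set: X] ->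
  (forall z : X, exists O, [/\ open O, O z & countable O]) -> countable [set: X].
Proof.
move=> cX H.
have [N HN] := choice H.
have [|D HD] := @cover_fin X N cX; first by move=> z; case: (HN z).
apply: (@sub_countable _ _ _ (\bigcup_(z in [set` D]) N z)).
  apply: subset_card_le => x _; have [z zD Nzx] := HD x; by exists z.
apply: bigcup_countable; first by apply: finite_set_countable; exact: finite_fset.
by move=> z _; case: (HN z).
Qed.

Lemma cover_finite (X : topologicalType) (A : set X) : compact [set: X] ->
  (forall z : X, exists O, [/\ open O, O z &
     forall a b, A a -> A b -> O a -> O b -> a = b]) -> finite_set A.
Proof.
move=> cX H.
have [N HN] := choice H.
have [|D HD] := @cover_fin X N cX; first by move=> z; case: (HN z).
apply: (@sub_finite_set _ _ (\bigcup_(z in [set` D]) (N z `&` A))).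
  move=> x Ax; have [z zD Nzx] := HD x; by exists z.
apply: bigcup_finite; first exact: finite_fset.
move=> z _; have [_ _ Hz] := HN z.
have [[a [Na Aa]]|] := pselect (exists a, (N z `&` A) a).
  apply: (@sub_finite_set _ _ [set a]); last exact: finite_set1.
  by move=> b [Nb Ab]; apply: Hz.
move=> nE; apply: (@sub_finite_set _ _ set0) => // b Hb; apply: nE; by exists b.
Qed.

Lemma CB_unfold (X : topologicalType) W (lt : W -> W -> Prop) (wf : well_founded lt) a :
  CB_level lt wf a = [set x : X | forall b (h : lt b a), derived (CB_level lt wf b) x].
Proof.
rewrite /CB_level Fix_eq //.
move=> a' f g H; congr (fun F => [set x | forall b (h : lt b a'), derived (F b h) x]).
apply: functional_extensionality_dep => b; apply: functional_extensionality_dep => h; exact: H.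
Qed.

Lemma CB_mono (X : topologicalType) W (lt : W -> W -> Prop) (wf : well_founded lt) a b (x : X) :
  lt b a -> CB_level lt wf a x -> CB_level lt wf b x.
Proof. by move=> ltba; rewrite CB_unfold => /(_ b ltba) []. Qed.

Import Num.Theory GRing.Theory Order.TTheory.
Set Implicit Arguments.
Unset Strict Implicit.

Section Count.
Variables (X : topologicalType) (W : Type) (lt : W -> W -> Prop) (wf : well_founded lt)
  (P : Type) (le : P -> P -> Prop).
Hypothesis T1 : accessible_space X.
Hypothesis cX : compact [set: X].
Hypothesis tri : forall a b : W, a = b \/ lt a b \/ lt b a.
Hypothesis hgt : forall x : X, exists a : W, has_height lt wf x a.
Variable U : X -> set X.
Hypothesis Uclo : forall x, clopen (U x) /\ U x x.
Hypothesis Ulev : forall x a, has_height lt wf x a -> U x `&` CB_level lt wf a = [set x].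
Hypothesis Upc : point_countable U.
Hypothesis cal : calibre_w1_w le.
Variable Ub : X -> P -> set X.
Hypothesis Ubase : P_base le Ub.

Definition good (z : X) := exists O, [/\ open O, O z & countable O].

Lemma min_bad : ~ countable [set: X] ->
  exists y b, [/\ ~ good y, has_height lt wf y b &
    forall z a, has_height lt wf z a -> lt a b -> good z].
Proof.
move=> nc.
have [y ny] : exists y, ~ good y.
  apply: contrapT => H; apply: nc; apply: cover_countable => // z.
  apply: contrapT => nz; apply: H; by exists z.
have [a ha] := hgt y.
pose S a := exists z, ~ good z /\ has_height lt wf z a.
have : S a by exists y.
elim/(well_founded_ind wf): a {ha} => a IH Sa.
have [[c [ltca Sc]]|] := pselect (exists c, lt c a /\ S c).
  exact: IH Sc.
move=> nS; case: Sa => z [nz hz]; exists z, a; split => // z' c hz' ltca.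
apply: contrapT => nz'; apply: nS; exists c; split => //; by exists z'.
Qed.


Section WithY.
Variables (y : X) (b : W).
Hypothesis ybad : ~ good y.
Hypothesis yh : has_height lt wf y b.
Hypothesis ymin : forall z a, has_height lt wf z a -> lt a b -> good z.

Let K := U y.
Definition Gs := [set z | K z /\ z <> y].

Lemma G_good z : Gs z -> good z.
Proof.
case=> Kz zy; have [a ha] := hgt z.
have inCB : CB_level lt wf b z -> False.
  move=> CBz; have : (U y `&` CB_level lt wf b) z by [].
  by rewrite (@Ulev y b yh) => /zy.
have [eab|[ltab|ltba]] := tri a b.
- by exfalso; apply: inCB; subst a; case: ha.
- exact: ymin ha ltab.
- by exfalso; apply: inCB; apply: (@CB_mono X W lt wf a b z ltba); case: ha.
Qed.

Lemma O_ex : exists Of : X -> set X, forall z, Gs z -> [/\ open (Of z), Of z z & countable (Of z)].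
Proof.
have : forall z, exists O, Gs z -> [/\ open O, O z & countable O].
  move=> z; have [Gz|nGz] := pselect (Gs z).
    have [Oz HO] := G_good Gz; by exists Oz.
  by exists set0.
by move=> /choice [Of HOf]; exists Of.
Qed.


Section WithO.
Variable Of : X -> set X.
Hypothesis HOf : forall z, Gs z -> [/\ open (Of z), Of z z & countable (Of z)].

Definition V z := U z `&` Of z.
Definition edge s w := [/\ Gs s, Gs w & (V s `&` V w) !=set0].
Definition conn := clos_refl_trans X edge.

Lemma edge_sym s w : edge s w -> edge w s.
Proof. by case=> Gs_ Gw [q [Vsq Vwq]]; split => //; exists q. Qed.

Lemma conn_sym s w : conn s w -> conn w s.
Proof.
move=> H; induction H as [a c Hac|a|a c d _ IH1 _ IH2].
- by apply: rt_step; apply: edge_sym.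
- exact: rt_refl.
- exact: rt_trans IH2 IH1.
Qed.

Lemma conn_G z w : Gs z -> conn z w -> Gs w.
Proof.
move=> Gz H; have := clos_rt_rtn1 _ _ _ _ H => {}H.
by induction H as [|a c Hac _ IH] => //; case: Hac.
Qed.

Fixpoint reach n z : set X := match n with
  | 0 => [set z]
  | n'.+1 => [set w | exists2 s, reach n' z s & edge s w] end.

Lemma V_count s : Gs s -> countable (V s).
Proof.
move=> Gs_; have [_ _ cO] := HOf Gs_.
apply: sub_countable cO; apply: subset_card_le => q []; done.
Qed.

Lemma reach_count n z : countable (reach n z).
Proof.
elim: n => [|n IH] /=; first exact: countable1.
apply: (@sub_countable _ _ _ (\bigcup_(s in reach n z `&` Gs) \bigcup_(q in V s) [set w | U w q])).
  apply: subset_card_le => w [s rs [Gs_ Gw [q [Vsq [Uwq _]]]]].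
  by exists s => //; exists q.
apply: bigcup_countable.
  apply: sub_countable IH; apply: subset_card_le => q []; done.
move=> s [_ Gs_]; apply: bigcup_countable; first exact: V_count.
move=> q _; exact: Upc.
Qed.

Lemma conn_reach z w : conn z w -> exists n, reach n z w.
Proof.
move=> H; have := clos_rt_rtn1 _ _ _ _ H => {}H.
induction H as [|a c e _ [n Hn]]; first by exists 0.
by exists n.+1; exists a.
Qed.

Lemma class_count z : countable (conn z).
Proof.
apply: (@sub_countable _ _ _ (\bigcup_(n in [set: nat]) reach n z)).
  apply: subset_card_le => w /conn_reach [n Hn]; by exists n.
apply: bigcup_countable => // n _; exact: reach_count.
Qed.

Definition rep z := xget y (conn z).

Lemma rep_conn z : conn z (rep z).
Proof. by apply: xgetPex; exists z; apply: rt_refl. Qed.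

Lemma conn_eq z w : conn z w -> conn z = conn w.
Proof.
move=> czw; apply/funext => v; apply/propext; split => H.
- exact: rt_trans (conn_sym czw) H.
- exact: rt_trans czw H.
Qed.

Lemma rep_eq z w : conn z w -> rep z = rep w.
Proof. by move=> czw; rewrite /rep (conn_eq czw). Qed.

Definition E := [set e | Gs e /\ rep e = e].

Lemma E_rep z : Gs z -> E (rep z).
Proof.
move=> Gz; have c := rep_conn z; split; first exact: conn_G c.
by rewrite -(rep_eq c).
Qed.

Lemma E_sub : E `<=` Gs. Proof. by move=> e []. Qed.

Lemma E_disc z a c : Gs z -> E a -> E c -> V z a -> V z c -> a = c.
Proof.
move=> Gz [Ga ra] [Gc rc] Vza Vzc.
have ea : conn z a.
  apply: rt_step; split => //; exists a; split => //; split; first by case: (Uclo a).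
  by have [_ ? _] := HOf Ga.
have ec : conn z c.
  apply: rt_step; split => //; exists c; split => //; split; first by case: (Uclo c).
  by have [_ ? _] := HOf Gc.
by rewrite -ra -rc -(rep_eq ea) -(rep_eq ec).
Qed.

Lemma E_uncount : ~ countable E.
Proof.
move=> cE; apply: ybad; exists K; split.
- by case: (Uclo y) => [[]].
- by case: (Uclo y).
apply: (@sub_countable _ _ _ (\bigcup_(i in [set: bool]) (if i then \bigcup_(e in E) conn e else [set y]))).
  apply: subset_card_le => z Kz.
  have [zy|zy] := pselect (z = y); first by exists false.
  exists true => //=; exists (rep z); first exact: E_rep.
  exact: conn_sym (rep_conn z).
apply: bigcup_countable => // -[] _; last exact: countable1.
apply: bigcup_countable => // e _; exact: class_count.
Qed.


Lemma final : False.
Proof.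
have [Hb1 Hb2 Hb3] := Ubase y.
have : forall e, exists p, Gs e -> Ub y p `<=` ~` [set e].
  move=> e; case: (pselect (Gs e)) => [[_ ey]|nG].
    have nb : nbhs y (~` [set e]).
      apply: open_nbhs_nbhs; split; last by move=> /esym.
      apply: closed_openC; exact: accessible_closed_set1.
    have [p Hp] := Hb2 _ nb; by exists p.
  have [p _] := Hb2 setT filterT; by exists p.
move=> /choice [pb Hpb].
pose F p := [set e | E e /\ ~ Ub y p e].
have finF : forall p, finite_set (F p).
  move=> p; apply: cover_finite => // z.
  case: (pselect (z = y)) => [->|zy].
    have := Hb1 p; rewrite nbhsE => -[B [oB By] BU].
    exists B; split => //.
    move=> a c [_ na] _ Ba _; exfalso; apply: na; exact: BU Ba.
  case: (pselect (K z)) => Kz.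
    have Gz : Gs z by [].
    exists (V z); split.
    - apply: openI; first by case: (Uclo z) => [[]].
      by case: (HOf Gz).
    - split; first by case: (Uclo z).
      by case: (HOf Gz).
    - by move=> a c [Ea _] [Ec _]; apply: E_disc.
  exists (~` K); split => //.
  - by apply: closed_openC; case: (Uclo y) => [[]].
  - by move=> a c [/E_sub [Ka _] _] _ /(_ Ka).
pose A := pb @` E.
have nA : ~ countable A.
  move=> cA; apply: E_uncount.
  apply: (@sub_countable _ _ _ (\bigcup_(p in A) F p)).
    apply: subset_card_le => e Ee; exists (pb e); first by exists e.
    split => // Ube; by apply: (Hpb e (E_sub Ee) e Ube).
  apply: bigcup_countable => // p _; exact: finite_set_countable.
have [B [BA infB [u Hu]]] := cal nA.
apply: infB; apply: (sub_finite_set _ (finite_image pb (finF u))).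
move=> p Bp; have [e Ee pe] := BA p Bp; exists e => //.
split => // Ube.
have : Ub y (pb e) e by apply: (Hb3 u (pb e)) => //; rewrite pe; exact: Hu.
by move=> H; exact: (Hpb e (E_sub Ee) e H erefl).
Qed.

End WithO.

End WithY.

Lemma count_main : countable [set: X].
Proof.
apply: contrapT => nc; have [y [b [yb yh ymin]]] := min_bad nc.
have [Of HOf] := O_ex yh ymin.
exact: (final yb HOf).
Qed.

End Count.

Section Met.
Variables (X : topologicalType) (W : Type) (lt : W -> W -> Prop) (wf : well_founded lt).
Hypothesis cX : compact [set: X].
Hypothesis tri : forall a b : W, a = b \/ lt a b \/ lt b a.
Hypothesis hgt : forall x : X, exists a : W, has_height lt wf x a.
Variable U : X -> set X.
Hypothesis Uclo : forall x, clopen (U x) /\ U x x.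
Hypothesis Ulev : forall x a, has_height lt wf x a -> U x `&` CB_level lt wf a = [set x].

Lemma sepU x z : x <> z -> exists w, ~ (U w x <-> U w z).
Proof.
move=> xz; have [a ha] := hgt x; have [c hc] := hgt z.
have key : forall x z a, has_height lt wf x a -> CB_level lt wf a z -> x <> z ->
    ~ (U x x <-> U x z).
  move=> x1 z1 a1 h1 CBz x1z1 [H _]; apply: x1z1.
  have : (U x1 `&` CB_level lt wf a1) z1 by split => //; apply: H; case: (Uclo x1).
  by rewrite (Ulev h1) => ->.
have [eac|[ltac|ltca]] := tri a c.
- subst c; exists x; apply: key ha _ xz; by case: hc.
- exists x; apply: key ha _ xz; apply: (@CB_mono X W lt wf c a z ltac); by case: hc.
- exists z => H; apply: (key z x c hc _ (nesym xz)).
  + apply: (@CB_mono X W lt wf a c x ltca); by case: ha.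
  + by case: H => H1 H2; split.
Qed.


Section Enum.
Variable en : nat -> X.
Hypothesis en_surj : forall x, exists k, en k = x.

Definition sep x z k := ~ (U (en k) x <-> U (en k) z).

Lemma sep_ex x z : x <> z -> exists k, sep x z k.
Proof. by move=> /sepU [w Hw]; have [k ek] := en_surj w; exists k; rewrite /sep ek. Qed.

Lemma sep_sym x z k : sep x z k = sep z x k.
Proof. by apply/propext; rewrite /sep; split => H [H1 H2]; apply: H; split. Qed.

Lemma sep_refl x k : ~ sep x x k.
Proof. by apply; split. Qed.

Lemma sep_trans x y z k : ~ sep x y k -> ~ sep y z k -> ~ sep x z k.
Proof.
move=> /contrapT [H1 H2] /contrapT [H3 H4] H; apply: H; split => h.
  exact/H3/H1.
exact/H2/H4.
Qed.

Definition mind x z := xget 0%N [set n | sep x z n /\ forall k, (k < n)%N -> ~ sep x z k].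

Lemma mind_spec x z : x <> z -> sep x z (mind x z) /\ forall k, (k < mind x z)%N -> ~ sep x z k.
Proof.
move=> xz; have := @xgetPex nat 0%N [set n | sep x z n /\ forall k, (k < n)%N -> ~ sep x z k].
rewrite -/(mind x z); apply; have [k sk] := sep_ex xz.
have ex : exists n, `[< sep x z n >] by exists k; apply/asboolP.
case: (ex_minnP ex) => m /asboolP sm mmin; exists m; split => // j ltjm sj.
by have := mmin j (asboolT sj); rewrite leqNgt ltjm.
Qed.

Lemma mind_sym x z : mind x z = mind z x.
Proof.
rewrite /mind; congr (xget 0%N _); apply/funext => n; apply/propext.
by split => -[H1 H2]; (split; [rewrite sep_sym | move=> k /H2; rewrite sep_sym]).
Qed.

Local Open Scope ring_scope.

Definition dist (x z : X) : Rdefinitions.R :=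
  if pselect (x = z) then 0 else ((mind x z).+1%:R)^-1.

Lemma dist_ge0 x z : 0 <= dist x z.
Proof. rewrite /dist; case: pselect => // _; by rewrite invr_ge0 ler0n. Qed.

Lemma dist0 x z : dist x z = 0 <-> x = z.
Proof.
rewrite /dist; case: pselect => // xz; split => // /eqP.
by rewrite invr_eq0 pnatr_eq0.
Qed.

Lemma dist_sym x z : dist x z = dist z x.
Proof.
case: (pselect (x = z)) => [->//|xz].
rewrite /dist; destruct (pselect (x = z)) as [h|h]; first by case: xz.
destruct (pselect (z = x)) as [h'|h']; first by case: xz.
by rewrite mind_sym.
Qed.

Lemma inv_le m n : (m <= n)%N -> (n.+1%:R : Rdefinitions.R)^-1 <= (m.+1%:R)^-1.
Proof.
move=> mn; rewrite lef_pV2 ?posrE ?ltr0n // ler_nat; by [].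
Qed.

Lemma inv_lt m n : ((n.+1%:R : Rdefinitions.R)^-1 < (m.+1%:R)^-1) = (m < n)%N.
Proof. by rewrite ltf_pV2 ?posrE ?ltr0n // ltr_nat. Qed.

Lemma dist_xx x : dist x x = 0.
Proof. by rewrite /dist; destruct (pselect (x = x)) as [h|h]. Qed.

Lemma dist_neq x z : x <> z -> dist x z = ((mind x z).+1%:R)^-1.
Proof. by move=> xz; rewrite /dist; destruct (pselect (x = z)) as [h|h]. Qed.

Lemma dist_tri x y z : dist x z <= dist x y + dist y z.
Proof.
case: (pselect (x = z)) => [xz|xz].
  by subst z; rewrite dist_xx; apply: addr_ge0; apply: dist_ge0.
case: (pselect (x = y)) => [xy|xy].
  by subst y; rewrite dist_xx add0r.
case: (pselect (y = z)) => [yz|yz].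
  by subst z; rewrite dist_xx addr0.
rewrite !dist_neq //.
have [sxz mxz] := mind_spec xz; have [sxy mxy] := mind_spec xy; have [syz myz] := mind_spec yz.
have [le1|lt1] := leqP (mind x y) (mind x z).
  apply: le_trans (inv_le le1) _; rewrite lerDl invr_ge0; exact: ler0n.
have [le2|lt2] := leqP (mind y z) (mind x z).
  apply: le_trans (inv_le le2) _; rewrite lerDr invr_ge0; exact: ler0n.
by exfalso; apply: (sep_trans (mxy _ lt1) (myz _ lt2)).
Qed.


Lemma ball_char x z n : (dist x z < (n.+1%:R)^-1) <-> forall k, (k <= n)%N -> ~ sep x z k.
Proof.
case: (pselect (x = z)) => [<-|xz].
  rewrite dist_xx; split => [_ k _|_]; [exact: sep_refl|by rewrite invr_gt0 ltr0n].
have [sxz mxz] := mind_spec xz; rewrite dist_neq // inv_lt; split.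
  by move=> nm k kn; apply: mxz; apply: leq_ltn_trans kn nm.
move=> H; rewrite ltnNge; apply/negP => mn; exact: H _ mn sxz.
Qed.


Lemma T_nbhs x k : nbhs x [set z | ~ sep x z k].
Proof.
case: (pselect (U (en k) x)) => Ux.
  apply: (@filterS _ _ _ (U (en k))).
    by move=> z Uz H; apply: H; split.
  by apply: open_nbhs_nbhs; split => //; case: (Uclo (en k)) => [[]].
apply: (@filterS _ _ _ (~` U (en k))).
  by move=> z Uz H; apply: H; split => h.
apply: open_nbhs_nbhs; split => //.
by apply: closed_openC; case: (Uclo (en k)) => [[]].
Qed.

Lemma B_nbhs x n : nbhs x [set z | forall k, (k <= n)%N -> ~ sep x z k].
Proof.
elim: n => [|n IH].
  apply: filterS (T_nbhs x 0) => z H k; by rewrite leqn0 => /eqP ->.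
apply: filterS (filterI IH (T_nbhs x n.+1)) => z [H1 H2] k.
rewrite leq_eqVlt => /orP [/eqP -> //|]; rewrite ltnS; exact: H1.
Qed.

Lemma S_open x k : open [set z | sep x z k].
Proof.
case: (pselect (U (en k) x)) => Ux.
  have -> : [set z | sep x z k] = ~` U (en k).
    apply/funext => z; apply/propext; split => H.
      by move=> Uz; apply: H; split.
    by move=> [H1 _]; apply: H; exact: H1.
  by apply: closed_openC; case: (Uclo (en k)) => [[]].
have -> : [set z | sep x z k] = U (en k).
  apply/funext => z; apply/propext; split => H.
    by apply: contrapT => nU; apply: H; split.
  by move=> [_ H2]; apply: Ux; exact: H2.
by case: (Uclo (en k)) => [[]].
Qed.

Lemma nbhs_char x (A : set X) : nbhs x A <-> exists2 e, 0 < e & [set z | dist x z < e] `<=` A.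
Proof.
split; last first.
  move=> [e e0 H].
  have hn := truncnS_gt (e^-1).
  set n := Num.Def.trunc (e^-1) in hn.
  have hn' : ((n.+1%:R)^-1 : Rdefinitions.R) < e.
    by rewrite -[X in _ < X]invrK ltf_pV2 ?posrE ?invr_gt0 ?ltr0n.
  apply: filterS (B_nbhs x n) => z Hz; apply: H => /=.
  apply: lt_trans hn'; exact: (ball_char x z n).2 Hz.
rewrite nbhsE => -[B [oB Bx] BA].
have : forall z, exists k, ~ B z -> sep x z k.
  move=> z; case: (pselect (B z)) => Bz; first by exists 0%N.
  have [k sk] : exists k, sep x z k by apply: sep_ex => xz; apply: Bz; rewrite -xz.
  by exists k.
move=> /choice [kz Hkz].
pose N z := if pselect (B z) is left _ then B else [set v | sep x v (kz z)].
have [|D HD] := @cover_fin X N cX.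
  move=> z; rewrite /N; destruct (pselect (B z)) as [Bz|nBz]; first by split.
  split; first exact: S_open.
  exact: Hkz.
pose n := (\max_(z <- D) kz z)%N.
exists ((n.+1%:R)^-1); first by rewrite invr_gt0 ltr0n.
move=> z /= /(ball_char x z n) Hz.
have [z' z'D] := HD z; rewrite /N; destruct (pselect (B z')) as [Bz|nBz]; first exact: BA.
move=> sz; exfalso; apply: (Hz (kz z')) => //.
rewrite /n; apply: leq_bigmax_seq => //.
Qed.

End Enum.
End Met.

Unset Implicit Arguments.

Theorem mainTheorem14
  (X : topologicalType)
  (W : Type) (lt : W -> W -> Prop) (wf : well_founded lt)
  (P : Type) (le : P -> P -> Prop) :
  tychonoff_space X ->
  compact [set: X] ->
  scattered X ->
  (* countable scattered height: all heights lie in a countable well-order *)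
  well_order lt -> countable [set: W] ->
  (forall x : X, exists a : W, has_height lt wf x a) ->
  (exists U : X -> set X,
      [/\ (forall x, clopen (U x) /\ U x x),
          (forall x a, has_height lt wf x a -> U x `&` CB_level lt wf a = [set x])
        & point_countable U]) ->
  directed le -> calibre_w1_w le -> has_P_base (X:=X) le ->
  countable [set: X] /\ metrizable X.
Proof.
move=> [_ T1] cX _ [_ _ tri] _ hgt [U [Uclo Ulev Upc]] _ cal [Ub Ubase].
have cnt := @count_main X W lt wf P le T1 cX tri hgt U Uclo Ulev Upc cal Ub Ubase.
split => //.
have [[x0 _]|X0] := pselect (exists x : X, True); last first.
  exists (fun _ _ => 0%R); split => x; exfalso; apply: X0; by exists x.
have [en Hen] : exists en : nat -> X, [set: X] = en @` [set: nat].
  apply/surjfunPex; case/pfcard_geP: cnt => // X0.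
  by have : ([set: X] : set X) x0 by []; rewrite X0.
have en_surj : forall x, exists k, en k = x.
  by move=> x; have : [set: X] x by []; rewrite Hen => -[k _ <-]; exists k.
exists (dist U en); split.
- exact: dist_ge0.
- exact: dist0.
- exact: dist_sym.
- move=> x y z; exact: (dist_tri tri hgt Uclo Ulev en_surj).
- move=> x A; exact: (nbhs_char cX tri hgt Uclo Ulev en_surj).
Qed.
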